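(* For all $a,b\in(0,\sqrt7)$, $$|b\sinh a-a\sinh b|\ge|a-b|\sqrt{(a\cosh a-\sinh a)(b\cosh b-\sinh b)}.$$ *)

(* Defs.v *)
From Stdlib Require Import Reals.

(* Main.v *)
Require Import Defs.
From Stdlib Require Import Reals Lra Psatz.
From Coquelicot Require Import Coquelicot.
Open Scope R_scope.

Lemma mono (f f' : R -> R) (a b : R) : a <= b ->
  (forall c, a <= c <= b -> is_derive f c (f' c)) ->
  (forall c, a < c < b -> 0 <= f' c) -> f a <= f b.
Proof.
  intros Hab Hd Hp. destruct (Req_dec a b) as [->|Hne]; [lra|].
  destruct (MVT_cor2 f f' a b) as [c [Hc1 Hc2]]; [lra| |].
  - intros c Hc. apply is_derive_Reals. now apply Hd.
  - specialize (Hp c Hc2). nra.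
Qed.

Lemma d_sinh x : is_derive sinh x (cosh x).
Proof. unfold sinh, cosh. auto_derive; auto. field. Qed.
Lemma d_cosh x : is_derive cosh x (sinh x).
Proof. unfold sinh, cosh. auto_derive; auto. field. Qed.


Fixpoint ec (n : nat) : R := match n with O => 1 | S k => ec k / INR (S k) end.
Definition E n y := ec n * y ^ n.

Lemma ec_pos n : 0 < ec n.
Proof. induction n; [simpl; lra|]. cbn [ec]. apply Rdiv_lt_0_compat; auto. apply lt_0_INR; lia. Qed.

Lemma d_E n y : is_derive (E (S n)) y (E n y).
Proof.
  unfold E. auto_derive; auto. change (match n with
         | 0%nat => 1
         | S _ => INR n + 1
         end) with (INR (S n)).
  field. apply not_0_INR; lia.
Qed.

Lemma d_E0 y : is_derive (E 0) y 0.
Proof. unfold E. simpl. auto_derive; auto. Qed.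

Fixpoint Cp n y := match n with O => 0 | S k => Cp k y + E (2*k) y end.
Fixpoint Sp n y := match n with O => 0 | S k => Sp k y + E (2*k+1) y end.

Lemma d_Sp n y : is_derive (Sp n) y (Cp n y).
Proof.
  induction n; simpl.
  - auto_derive; auto.
  - apply (is_derive_plus (Sp n) (E (2*n+1))); auto.
    replace (2*n+1)%nat with (S (2*n)) by lia. apply d_E.
Qed.

Lemma d_Cp n y : is_derive (Cp (S n)) y (Sp n y).
Proof.
  induction n; simpl.
  - unfold E; simpl. auto_derive; auto.
  - simpl in IHn.
    apply (is_derive_plus (fun y => Cp n y + E (2*n) y) (E (S (n + S (n+0))))); auto.
    replace (S (n + S (n+0))) with (S (2*n+1)) by lia. apply d_E.
Qed.

Lemma E_0 n : E (S n) 0 = 0.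
Proof. unfold E. simpl. ring. Qed.
Lemma E_0' m : (0 < m)%nat -> E m 0 = 0.
Proof. intros. destruct m; [lia|apply E_0]. Qed.
Lemma Sp_0 n : Sp n 0 = 0.
Proof. induction n; [reflexivity|]. change (Sp (S n) 0) with (Sp n 0 + E (2*n+1) 0). rewrite IHn, E_0' by lia. ring. Qed.
Lemma Cp_0 n : Cp (S n) 0 = 1.
Proof. induction n; [unfold Cp, E; simpl; ring|]. 
  change (Cp (S (S n)) 0) with (Cp (S n) 0 + E (2 * S n) 0). rewrite IHn, E_0' by lia. ring. Qed.

Lemma E_nonneg n y : 0 <= y -> 0 <= E n y.
Proof. intros. unfold E. apply Rmult_le_pos. left; apply ec_pos. apply pow_le; auto. Qed.

Lemma cosh_pos y : 0 < cosh y.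
Proof. unfold cosh. assert (0 < exp y) by apply exp_pos. assert (0 < exp (-y)) by apply exp_pos. lra. Qed.

Lemma LS_of_LC n : (forall y, 0 <= y -> Cp n y <= cosh y) -> forall y, 0 <= y -> Sp n y <= sinh y.
Proof.
  intros H y Hy.
  assert (0 - 0 <= sinh y - Sp n y); [|lra].
  replace (0-0) with (sinh 0 - Sp n 0) by (rewrite sinh_0, Sp_0; ring).
  apply (mono (fun y => sinh y - Sp n y) (fun y => cosh y - Cp n y)); auto.
  - intros c _. apply (is_derive_minus sinh (Sp n)). apply d_sinh. apply d_Sp.
  - intros c Hc. specialize (H c ltac:(lra)). lra.
Qed.

Lemma LC n : forall y, 0 <= y -> Cp n y <= cosh y.
Proof.
  induction n; intros y Hy.
  - simpl. left; apply cosh_pos.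
  - assert (0 - 0 <= cosh y - Cp (S n) y); [|lra].
    replace (0-0) with (cosh 0 - Cp (S n) 0) by (rewrite cosh_0, Cp_0; ring).
    apply (mono (fun y => cosh y - Cp (S n) y) (fun y => sinh y - Sp n y)); auto.
    + intros c _. apply (is_derive_minus cosh (Cp (S n))). apply d_cosh. apply d_Cp.
    + intros c Hc. pose proof (LS_of_LC n IHn c ltac:(lra)). lra.
Qed.

Lemma LS n y : 0 <= y -> Sp n y <= sinh y.
Proof. apply LS_of_LC. apply LC. Qed.

Section Up.
Variable M Y : R.
Hypothesis HM : forall y, 0 <= y <= Y -> cosh y <= M.

Lemma US_of_UC n : (forall y, 0 <= y <= Y -> cosh y <= Cp n y + M * E (2*n) y) ->
  forall y, 0 <= y <= Y -> sinh y <= Sp n y + M * E (2*n+1) y.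
Proof.
  intros H y Hy.
  assert (0 <= Sp n y + M * E (2*n+1) y - sinh y); [|lra].
  replace 0 with (Sp n 0 + M * E (2*n+1) 0 - sinh 0) at 1.
  2:{ rewrite Sp_0, sinh_0. replace (2*n+1)%nat with (S (2*n)) by lia. rewrite E_0; ring. }
  apply (mono (fun y => Sp n y + M * E (2*n+1) y - sinh y) (fun y => Cp n y + M * E (2*n) y - cosh y)); try lra.
  - intros c _. apply (is_derive_minus (fun y => Sp n y + M * E (2*n+1) y) sinh); [|apply d_sinh].
    apply (is_derive_plus (Sp n) (fun y => M * E (2*n+1) y)). apply d_Sp.
    apply (is_derive_scal (E (2*n+1))). replace (2*n+1)%nat with (S (2*n)) by lia. apply d_E.
  - intros c Hc. specialize (H c ltac:(lra)). lra.
Qed.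

Lemma UC n : forall y, 0 <= y <= Y -> cosh y <= Cp n y + M * E (2*n) y.
Proof.
  induction n; intros y Hy.
  - simpl. unfold E; simpl. rewrite Rmult_1_r, Rmult_1_r, Rplus_0_l. now apply HM.
  - assert (0 <= Cp (S n) y + M * E (2*S n) y - cosh y); [|lra].
    replace 0 with (Cp (S n) 0 + M * E (2*S n) 0 - cosh 0) at 1.
    2:{ rewrite Cp_0, cosh_0. replace (2*S n)%nat with (S (2*n+1)) by lia. rewrite E_0; ring. }
    apply (mono (fun y => Cp (S n) y + M * E (2*S n) y - cosh y) (fun y => Sp n y + M * E (2*n+1) y - sinh y)); try lra.
    + intros c _. apply (is_derive_minus (fun y => Cp (S n) y + M * E (2*S n) y) cosh); [|apply d_cosh].
      apply (is_derive_plus (Cp (S n)) (fun y => M * E (2*S n) y)). apply d_Cp.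
      apply (is_derive_scal (E (2*S n))). replace (2*S n)%nat with (S (2*n+1)) by lia. apply d_E.
    + intros c Hc. pose proof (US_of_UC n IHn c ltac:(lra)). lra.
Qed.
End Up.


Lemma poly_eq y : -y^4/8 - (y^2/4+2)*(Cp 10 y + 729 * E 20 y) - 3*y^2/4 + 2*y*Sp 10 y + 2
 = y^6 * ((1/288) + (-1/806400)*y^4 + (-1/43545600)*y^6 + (-1/4470681600)*y^8 + (-1/697426329600)*y^10 + (-1/150644087193600)*y^12 + (-89/143111882833920000)*y^14 + (-1/13349256560640000)*y^16).
Proof.
  cbn [Cp Sp Nat.mul Nat.add]. unfold E. cbn [ec]. cbn [INR]. field; lra.
Qed.

Lemma Q_pos y : 0 <= y -> y^2 <= 28 ->
 0 <= ((1/288) + (-1/806400)*y^4 + (-1/43545600)*y^6 + (-1/4470681600)*y^8 + (-1/697426329600)*y^10 + (-1/150644087193600)*y^12 + (-89/143111882833920000)*y^14 + (-1/13349256560640000)*y^16).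
Proof.
  intros H0 H2.
  assert (Hp : forall m, y^(2*m) <= 28^m).
  { intros m. rewrite pow_mult. apply pow_incr. split; auto. apply pow_le; auto. }
  pose proof (Hp 2%nat) as P2. pose proof (Hp 3%nat) as P3. pose proof (Hp 4%nat) as P4.
  pose proof (Hp 5%nat) as P5. pose proof (Hp 6%nat) as P6. pose proof (Hp 7%nat) as P7.
  pose proof (Hp 8%nat) as P8. simpl Nat.mul in *. lra.
Qed.

Lemma exp_le x y : x <= y -> exp x <= exp y.
Proof. intros [H|H]; [left; now apply exp_increasing|subst; lra]. Qed.

Lemma HM729 y : 0 <= y <= 6 -> cosh y <= 729.
Proof.
  intros Hy. unfold cosh.
  assert (exp (-y) <= exp y) by (apply exp_le; lra).
  assert (exp y <= exp 6) by (apply exp_le; lra).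
  assert (E6 : exp 6 = exp 1 * exp 1 * exp 1 * (exp 1 * exp 1 * exp 1)).
  { rewrite <- !exp_plus. f_equal. ring. }
  pose proof exp_le_3. pose proof (exp_pos 1).
  assert (exp 1 * exp 1 * exp 1 <= 27).
  { assert (exp 1 * exp 1 <= 9) by nra. nra. }
  assert (exp 6 <= 729) by (rewrite E6; assert (0 < exp 1 * exp 1 * exp 1) by (apply Rmult_lt_0_compat; nra); nra).
  lra.
Qed.

Lemma Dy_pos y : 0 <= y -> y^2 <= 28 ->
  0 <= -y^4/8 - (y^2/4+2)*cosh y - 3*y^2/4 + 2*y*sinh y + 2.
Proof.
  intros H0 H2.
  assert (y <= 6) by nra.
  pose proof (UC 729 6 HM729 10 y ltac:(lra)) as U.
  pose proof (LS 10 y H0) as L. cbn [Nat.mul Nat.add] in U.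
  pose proof (poly_eq y) as PE. pose proof (Q_pos y H0 H2) as Q.
  assert (0 <= y^6) by (apply pow_le; auto).
  assert (0 <= y^6 * ((1/288) + (-1/806400)*y^4 + (-1/43545600)*y^6 + (-1/4470681600)*y^8 + (-1/697426329600)*y^10 + (-1/150644087193600)*y^12 + (-89/143111882833920000)*y^14 + (-1/13349256560640000)*y^16)) by (apply Rmult_le_pos; auto).
  assert (0 <= y^2) by (apply pow_le; auto).
  assert ((y^2/4+2)*cosh y <= (y^2/4+2)*(Cp 10 y + 729 * E 20 y)) by (apply Rmult_le_compat_l; lra).
  assert (2*y*Sp 10 y <= 2*y*sinh y) by (apply Rmult_le_compat_l; lra).
  lra.
Qed.


Definition q x := x^2 * cosh x - x * sinh x.
Definition p x := x^2 * sinh x - 2*x*cosh x + 2*sinh x.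
Definition Wf x := -x^4 + x^2 * sinh x ^2 - 2*x^2*cosh x^2 + 4*x*sinh x*cosh x - 2*sinh x^2.

Lemma ch2 x : cosh x ^2 - sinh x ^2 = 1.
Proof. unfold cosh, sinh. rewrite exp_Ropp. pose proof (exp_pos x). field. lra. Qed.

Lemma W_eq x : 2 * Wf x = -(2*x)^4/8 - ((2*x)^2/4+2)*cosh (2*x) - 3*(2*x)^2/4 + 2*(2*x)*sinh (2*x) + 2.
Proof.
  unfold Wf, cosh, sinh. rewrite !exp_Ropp.
  replace (2*x) with (x+x) by ring. rewrite exp_plus.
  pose proof (exp_pos x). field. lra.
Qed.

Lemma W_pos x : 0 <= x -> x^2 <= 7 -> 0 <= Wf x.
Proof.
  intros. pose proof (Dy_pos (2*x) ltac:(lra) ltac:(nra)). rewrite <- W_eq in H1. lra.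
Qed.

Lemma sinh_pos x : 0 < x -> 0 < sinh x.
Proof. intros. unfold sinh. pose proof (exp_increasing (-x) x ltac:(lra)). lra. Qed.

Lemma h_pos x : 0 < x -> 0 < x * cosh x - sinh x.
Proof.
  intros Hx.
  destruct (MVT_cor2 (fun x => x * cosh x - sinh x) (fun x => x * sinh x) 0 x Hx) as [c [Hc1 Hc2]].
  - intros c _. apply is_derive_Reals. unfold cosh, sinh. auto_derive; auto. field.
  - rewrite sinh_0, Rmult_0_l in Hc1. pose proof (sinh_pos c ltac:(lra)).
    assert (0 < c * sinh c * (x - 0)) by (apply Rmult_lt_0_compat; [apply Rmult_lt_0_compat|]; lra).
    lra.
Qed.

Lemma q_pos x : 0 < x -> 0 < q x.
Proof. intros. unfold q. pose proof (h_pos x H). replace (x^2*cosh x - x*sinh x) with (x*(x*cosh x - sinh x)) by ring.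
  apply Rmult_lt_0_compat; lra. Qed.

Lemma d_R x : x <> 0 -> q x <> 0 ->
  is_derive (fun x => - (p x / q x)) x (Wf x / (q x)^2).
Proof.
  intros Hx Hq.
  apply (is_derive_ext_loc (fun x => - ((x^2 * sinh x - 2*x*cosh x + 2*sinh x) / (x^2 * cosh x - x * sinh x)))).
  { apply filter_forall. intros; reflexivity. }
  assert (E1 : Wf x / (q x)^2 = - ((x^2 * cosh x) * q x - p x * (x^2 * sinh x + x * cosh x - sinh x)) / (q x)^2).
  { f_equal.
    assert (Wf x = - ((x^2 * cosh x) * q x - p x * (x^2 * sinh x + x * cosh x - sinh x)) + x^4 * (cosh x ^2 - sinh x^2 - 1)) by (unfold Wf, p, q; ring).
    rewrite ch2 in H. rewrite H. ring. }
  rewrite E1. unfold q in *. unfold p. unfold cosh, sinh in *.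
  auto_derive.
  { intro Hc; apply Hq; rewrite <- Hc; field. }
  field. intro Hc; apply Hq. replace 0 with (0/2) by field. rewrite <- Hc. field.
Qed.


Lemma cross u v : 0 < u -> u <= v -> v^2 <= 7 -> p v * q u <= p u * q v.
Proof.
  intros Hu Huv Hv.
  assert (H : - (p u / q u) <= - (p v / q v)).
  { apply (mono (fun x => - (p x / q x)) (fun x => Wf x / (q x)^2)); auto.
    - intros c Hc. apply d_R; [lra|]. pose proof (q_pos c ltac:(lra)); lra.
    - intros c Hc. apply Rdiv_le_0_compat.
      + apply W_pos; [lra|]. assert (c^2 <= v^2) by (apply pow_incr; lra). lra.
      + pose proof (q_pos c ltac:(lra)). apply pow_lt; lra. }
  pose proof (q_pos u Hu). pose proof (q_pos v ltac:(lra)).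
  assert (p v * q u = (p v / q v) * (q u * q v)) by (field; lra).
  assert (p u * q v = (p u / q u) * (q u * q v)) by (field; lra).
  assert (0 < q u * q v) by (apply Rmult_lt_0_compat; lra).
  nra.
Qed.

Definition f x := sinh x / x.
Definition g x := (x * cosh x - sinh x) / x^2.
Definition gp x := p x / x^3.

Lemma d_f x : x <> 0 -> is_derive f x (g x).
Proof. intros. unfold f, g, sinh, cosh. auto_derive; auto. field; auto. Qed.

Lemma d_g x : x <> 0 -> is_derive g x (gp x).
Proof. intros. unfold g, gp, p, sinh, cosh. auto_derive; auto. field; auto. Qed.

Lemma g_q x : x <> 0 -> g x = q x / x^3.
Proof. intros. unfold g, q. field; auto. Qed.

Lemma g_pos x : 0 < x -> 0 < g x.
Proof. intros. unfold g. apply Rdiv_lt_0_compat. now apply h_pos. apply pow_lt; lra. Qed.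

Lemma d_shift (h h' : R -> R) a s : is_derive h (a+s) (h' (a+s)) -> is_derive (fun s => h (a+s)) s (h' (a+s)).
Proof.
  intros H. pose proof (is_derive_comp h (fun s => a + s) s (h' (a+s)) 1 H) as H2.
  replace (h' (a+s)) with (scal 1 (h' (a+s))). apply H2. auto_derive; auto.
  unfold scal; simpl; unfold mult; simpl. ring.
Qed.

Lemma d_refl (h h' : R -> R) b s : is_derive h (b-s) (h' (b-s)) -> is_derive (fun s => h (b-s)) s (- h' (b-s)).
Proof.
  intros H. pose proof (is_derive_comp h (fun s => b - s) s (h' (b-s)) (-1) H) as H2.
  replace (- h' (b-s)) with (scal (-1) (h' (b-s))). apply H2. auto_derive; auto.
  unfold scal; simpl; unfold mult; simpl. ring.
Qed.


Lemma Pmono a b t : 0 < a -> a < b -> b^2 <= 7 -> 0 <= t -> a + t <= b - t ->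
  g a * g b <= g (a+t) * g (b-t).
Proof.
  intros Ha Hab Hb Ht Htt.
  replace (g a * g b) with (g (a+0) * g (b-0)) by (f_equal; f_equal; ring).
  apply (mono (fun s => g (a+s) * g (b-s)) (fun s => gp (a+s) * g (b-s) + g (a+s) * (- gp (b-s)))); auto.
  - intros c Hc. apply (is_derive_mult (fun s => g (a+s)) (fun s => g (b-s))).
    + apply (d_shift g gp). apply d_g. lra.
    + apply (d_refl g gp). apply d_g. lra.
    + intros; apply Rmult_comm.
  - intros c Hc. set (u := a + c). set (v := b - c).
    assert (0 < u) by (unfold u; lra). assert (u <= v) by (unfold u, v; lra).
    assert (0 < v) by lra.
    assert (v^2 <= 7) by (assert (v^2 <= b^2) by (apply pow_incr; unfold v; lra); lra).
    pose proof (cross u v H H0 H2).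
    unfold gp. rewrite !g_q by lra.
    replace (p u / u ^ 3 * (q v / v ^ 3) + q u / u ^ 3 * - (p v / v ^ 3))
      with ((p u * q v - p v * q u) / (u^3 * v^3)) by (field; lra).
    apply Rdiv_le_0_compat; [lra|]. apply Rmult_lt_0_compat; apply pow_lt; lra.
Qed.

Lemma Pall a b t : 0 < a -> a < b -> b^2 <= 7 -> 0 <= t <= b - a ->
  g a * g b <= g (a+t) * g (b-t).
Proof.
  intros Ha Hab Hb Ht.
  destruct (Rle_lt_dec (a+t) (b-t)).
  - apply Pmono; lra.
  - replace (g (a+t) * g (b-t)) with (g (a+(b-a-t)) * g (b-(b-a-t))).
    apply Pmono; lra.
    replace (a + (b-a-t)) with (b-t) by ring. replace (b - (b-a-t)) with (a+t) by ring. ring.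
Qed.

Lemma key a b : 0 < a -> a < b -> b^2 <= 7 ->
  (b - a) * sqrt (g a * g b) <= f b - f a.
Proof.
  intros Ha Hab Hb.
  set (K := sqrt (g a * g b)).
  pose proof (g_pos a Ha) as Ga. pose proof (g_pos b ltac:(lra)) as Gb.
  assert (HK : K * K = g a * g b) by (apply sqrt_sqrt; nra).
  assert (HK0 : 0 <= K) by apply sqrt_pos.
  assert (H : f (a+0) - f (b-0) - 2*0*K <= f (a+(b-a)) - f (b-(b-a)) - 2*(b-a)*K).
  { apply (mono (fun t => f (a+t) - f (b-t) - 2*t*K) (fun t => g (a+t) - - g (b-t) - 2*K)); [lra| |].
    - intros c Hc. apply (is_derive_minus (fun t => f (a+t) - f (b-t)) (fun t => 2*t*K)).
      + apply (is_derive_minus (fun t => f (a+t)) (fun t => f (b-t))).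
        * apply (d_shift f g). apply d_f. lra.
        * apply (d_refl f g). apply d_f. lra.
      + auto_derive; auto. ring.
    - intros c Hc. pose proof (Pall a b c Ha Hab Hb ltac:(lra)).
      pose proof (g_pos (a+c) ltac:(lra)). pose proof (g_pos (b-c) ltac:(lra)).
      assert (0 <= g (a+c) + g (b-c) - 2*K); [|lra].
      assert (4 * (K*K) <= (g (a+c) + g (b-c))^2).
      { pose proof (pow2_ge_0 (g (a+c) - g (b-c))). rewrite HK. nra. }
      destruct (Rle_lt_dec (2*K) (g (a+c) + g (b-c))); [lra|].
      assert ((g (a+c) + g (b-c))^2 < (2*K)^2) by (simpl; nra).
      nra. }
  replace (a+0) with a in H by ring. replace (b-0) with b in H by ring.
  replace (a+(b-a)) with b in H by ring. replace (b-(b-a)) with a in H by ring.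
  lra.
Qed.


Lemma main_lt (a b : R) : 0 < a -> a < b -> b < sqrt 7 ->
  Rabs (b * sinh a - a * sinh b) >=
  Rabs (a - b) * sqrt ((a * cosh a - sinh a) * (b * cosh b - sinh b)).
Proof.
  intros Ha Hab Hb7.
  assert (Hb : b^2 <= 7).
  { pose proof (sqrt_sqrt 7 ltac:(lra)). simpl. nra. }
  pose proof (key a b Ha Hab Hb) as Hk.
  pose proof (g_pos a Ha) as Ga. pose proof (g_pos b ltac:(lra)) as Gb.
  assert (E1 : b * sinh a - a * sinh b = - (a*b) * (f b - f a)) by (unfold f; field; lra).
  assert (E2 : (a * cosh a - sinh a) * (b * cosh b - sinh b) = (a*b)^2 * (g a * g b)) by (unfold g; field; lra).
  rewrite E1, E2, sqrt_mult by (try apply pow2_ge_0; nra).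
  rewrite sqrt_pow2 by nra.
  assert (0 <= (b-a) * sqrt (g a * g b)) by (apply Rmult_le_pos; [lra|apply sqrt_pos]).
  assert (0 < a*b) by nra.
  rewrite (Rabs_left1 (- (a*b) * (f b - f a))) by nra. rewrite (Rabs_left1 (a - b)) by lra.
  assert ((a*b) * ((b - a) * sqrt (g a * g b)) <= (a*b) * (f b - f a)) by (apply Rmult_le_compat_l; lra).
  nra.
Qed.

Theorem mainTheorem8 (a b : R)
  (ha : 0 < a < sqrt 7) (hb : 0 < b < sqrt 7) :
  Rabs (b * sinh a - a * sinh b) >=
  Rabs (a - b) * sqrt ((a * cosh a - sinh a) * (b * cosh b - sinh b)).
Proof.
  destruct (Rtotal_order a b) as [H|[H|H]].
  - apply main_lt; lra.
  - subst. replace (b - b) with 0 by ring. rewrite Rabs_R0, Rmult_0_l. apply Rle_ge, Rabs_pos.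
  - pose proof (main_lt b a ltac:(lra) H ltac:(lra)) as M.
    rewrite Rabs_minus_sym. rewrite (Rabs_minus_sym a b).
    rewrite (Rmult_comm (a * cosh a - sinh a)). exact M.
Qed.
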